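(* Let $h \ge 2$ and $k \ge 3$ be integers. For every integer $i_0 \in [0,h-2]$, the sumset size set $\mathcal{R}_{\mathbf{Z}}(h,k)$ contains the arithmetic progression \[ \left\{ (i_0+1)b + (h-i_0)(h(k-2)+1) - \frac{(h+i_0+1)(h-i_0)(k-2)}{2} \;:\; b \in \big[(h-i_0)(k-2) - (k-3),\ (h-i_0)(k-2)\big] \right\}. \] In particular, $\mathcal{R}_{\mathbf{Z}}(h,k)$ contains the integer interval \[ \left[ \frac{h^2(k-2)}{2} + \frac{hk}{2} - k + 3,\ \frac{h^2(k-2)}{2} + \frac{hk}{2} \right]. \]
   Context: For a positive integer $h$ and a finite set $A$ of integers, $hA$ denotes the set of all sums $a_1+\cdots+a_h$ with $a_1,\ldots,a_h \in A$ (not necessarily distinct). The sumset size set is $\mathcal{R}_{\mathbf{Z}}(h,k) = \{ |hA| : A \subseteq \mathbf{Z},\ |A| = k\}$. For real $u,v$, the integer interval $[u,v]$ is $\{n \in \mathbf{Z} : u \le n \le v\}$. *)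

(* Defs.v *)
From mathcomp Require Import all_boot all_order all_algebra.
Set Implicit Arguments. Unset Strict Implicit. Unset Printing Implicit Defensive.
Import Order.TTheory GRing.Theory Num.Theory.
Local Open Scope ring_scope.

(* A finite set of integers is represented by a duplicate-free list A. *)

Fixpoint hsums (h : nat) (A : seq int) : seq int :=
  match h with
  | 0%N => [:: 0]
  | h'.+1 => [seq a + s | a <- A, s <- hsums h' A]
  end.

Definition sumset (h : nat) (A : seq int) : seq int := undup (hsums h A).

Definition RZ (h k : nat) (n : int) : Prop :=
  exists A : seq int, uniq A /\ size A = k /\ (size (sumset h A))%:Z = n.

(* Main.v *)
Require Import Defs.
From mathcomp Require Import all_boot all_order all_algebra zify.
Import Order.TTheory GRing.Theory Num.Theory.

Definition Aset (c b : nat) : seq int := [seq (Posz i) | i <- iota 0 c.+1] ++ [:: Posz b].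

Lemma memA c b (a : int) : a \in Aset c b <-> (exists i, (i <= c)%N /\ a = Posz i) \/ a = Posz b.
Proof.
rewrite /Aset mem_cat mem_seq1; split.
- case/orP => [/mapP [i]|/eqP ->]; last by right.
  rewrite mem_iota => /andP [_ Hi] ->; left; exists i; split => //; lia.
- case => [[i [Hi ->]]|->]; last by rewrite eqxx orbT.
  by rewrite map_f // mem_iota; apply/andP; split => //; lia.
Qed.

Lemma memH c b h (s : int) : s \in hsums h (Aset c b) <->
  exists j r, [/\ (j <= h)%N, (r <= (h - j) * c)%N & s = Posz (j * b + r)].
Proof.
elim: h s => [|h IH] s.
  rewrite /= mem_seq1; split.
  - by move/eqP => ->; exists 0%N, 0%N; split.
  - by case=> j [r [Hj Hr ->]]; apply/eqP; congr Posz; lia.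
split.
- case/allpairsP => [[a t]] /= [Ha Ht ->].
  have [j [r [Hj Hr ->]]] := (IH t).1 Ht.
  case/memA: Ha => [[i [Hi ->]]|->].
  + exists j, (i + r)%N; split; [lia| |by rewrite -PoszD; congr Posz; lia].
    have -> : (h.+1 - j = (h - j).+1)%N by lia.
    rewrite mulSn; lia.
  + exists j.+1, r; split; [lia|by rewrite subSS|by rewrite -PoszD; congr Posz; lia].
- case=> j [r [Hj Hr ->]]; apply/allpairsP.
  case: j Hj Hr => [|j] Hj Hr.
  + exists (Posz (minn r c), Posz (r - minn r c)); split => /=.
    * by apply/memA; left; exists (minn r c); split => //; lia.
    * apply/IH; exists 0%N, (r - minn r c)%N; split => //.
      rewrite subn0; rewrite subn0 mulSn in Hr; lia.
    * by rewrite -PoszD; congr Posz; lia.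
  + exists (Posz b, Posz (j * b + r)); split => /=.
    * by apply/memA; right.
    * apply/IH; exists j, r; split; [lia|by rewrite subSS in Hr|done].
    * by rewrite -PoszD; congr Posz; rewrite mulSn; lia.
Qed.
 

Lemma repr_iff b c h n : (0 < b)%N -> (c <= b)%N ->
  (exists j r, [/\ (j <= h)%N, (r <= (h - j) * c)%N & n = (j * b + r)%N]) <->
  ((n <= h * b) && (n %% b <= (h - n %/ b) * c))%N.
Proof.
move=> b0 cb; split.
- case=> j [r [Hj Hr ->]].
  rewrite divnMDl // modnMDl.
  have E := divn_eq r b.
  set q := r %/ b in E *; set rr := r %% b in E *.
  have Hq : (q <= h - j)%N.
    have : (q * b <= (h - j) * b)%N by nia.
    by rewrite leq_pmul2r.
  apply/andP; split; first by nia.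
  have -> : (h - (j + q) = (h - j) - q)%N by lia.
  rewrite mulnBl. nia.
- case/andP => H1 H2; exists (n %/ b), (n %% b); split.
  + by rewrite -ltnS ltn_divLR //; nia.
  + done.
  + by rewrite {1}(divn_eq n b).
Qed.

Lemma cnt_le t b : count (fun r => (r <= t)%N) (iota 0 b) = minn b t.+1.
Proof.
elim: b => [|b IH]; first by [].
rewrite -addn1 iotaD count_cat IH /= add0n; lia.
Qed.

Definition P h c b n := (n %% b <= (h - n %/ b) * c)%N.

Lemma block h c b j : (0 < b)%N ->
  count (P h c b) (iota (j * b) b) = minn b ((h - j) * c).+1.
Proof.
move=> b0; rewrite -(addn0 (j * b)) iotaDl count_map -cnt_le.
apply: eq_in_count => r; rewrite mem_iota => /andP [_ Hr] /=.
rewrite /P divnMDl // modnMDl divn_small // modn_small // ?addn0 //.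
Qed.

Fixpoint G b c m := if m is m'.+1 then minn b (m * c).+1 + G b c m' else 0%N.

Lemma cnt_blocks h c b m : (0 < b)%N -> (m <= h)%N ->
  count (P h c b) (iota ((h - m) * b) (m * b)) = G b c m.
Proof.
move=> b0; elim: m => [|m IH] Hm; first by rewrite mul0n.
rewrite mulSn iotaD count_cat block //.
have -> : ((h - m.+1) * b + b = (h - m) * b)%N.
  have -> : (h - m = (h - m.+1).+1)%N by lia.
  by rewrite mulSn addnC.
rewrite IH; last by lia.
have -> : (h - (h - m.+1) = m.+1)%N by lia.
done.
Qed.

Lemma cnt_total h c b : (0 < b)%N ->
  count (P h c b) (iota 0 (h * b).+1) = (G b c h).+1.
Proof.
move=> b0; rewrite -addn1 iotaD count_cat.
have := (@cnt_blocks h c b h b0) (leqnn h); rewrite subnn mul0n => ->.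
rewrite /= /P add0n modnMl mulnK // subnn; lia.
Qed.

Lemma G_low b c n m : (m <= n)%N -> (n * c < b)%N ->
  (2 * G b c m = 2 * m + c * (m * m.+1))%N.
Proof.
move=> + H; elim: m => [|m IH] Hm; first by rewrite /=; lia.
have -> : G b c m.+1 = (minn b (m.+1 * c).+1 + G b c m)%N by []. rewrite mulnDr IH; last by lia.
have -> : minn b (m.+1 * c).+1 = (m.+1 * c).+1.
  apply/minn_idPr; have : (m.+1 * c <= n * c)%N by rewrite leq_mul2r; apply/orP; right.
  lia.
nia.
Qed.

Lemma G_high b c n m : (n <= m)%N -> (b <= n.+1 * c)%N ->
  (G b c m = G b c n + (m - n) * b)%N.
Proof.
move=> + H; elim: m => [|m IH] Hm.
  by have -> : n = 0%N by lia.
case: (ltngtP n m.+1) Hm => // [Hlt|<-] _; last by rewrite subnn mul0n addn0.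
have -> : G b c m.+1 = (minn b (m.+1 * c).+1 + G b c m)%N by []. rewrite IH; last by lia.
have -> : minn b (m.+1 * c).+1 = b.
  apply/minn_idPl; have : (n.+1 * c <= m.+1 * c)%N by rewrite leq_mul2r; apply/orP; right.
  lia.
have -> : (m.+1 - n = (m - n).+1)%N by lia.
rewrite mulSn; lia.
Qed.

Lemma Posz_inj' : injective Posz. Proof. by move=> x y []. Qed.

Lemma size_sumset h c b : (0 < b)%N -> (c <= b)%N ->
  size (sumset h (Aset c b)) = (G b c h).+1.
Proof.
move=> b0 cb.
set L := [seq Posz n | n <- iota 0 (h * b).+1 & P h c b n].
have HL : uniq L.
  by rewrite map_inj_uniq ?filter_uniq ?iota_uniq //; exact: Posz_inj'.
have -> : size (sumset h (Aset c b)) = size L.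
  apply: perm_size; apply: uniq_perm; first exact: undup_uniq.
    exact: HL.
  move=> x; rewrite mem_undup; apply/idP/idP.
  - move/memH => [j [r [Hj Hr ->]]].
    rewrite mem_map; last exact: Posz_inj'.
    rewrite mem_filter mem_iota /=.
    have /andP [H1 H2] := (@repr_iff b c h (j * b + r) b0 cb).1 (ex_intro _ j (ex_intro _ r (And3 Hj Hr erefl))).
    apply/andP; split; [exact: H2|lia].
  - case/mapP => n; rewrite mem_filter mem_iota => /andP [HP /andP [_ Hn]] ->.
    have [j [r [Hj Hr ->]]] : exists j r, [/\ (j <= h)%N, (r <= (h - j) * c)%N & n = (j * b + r)%N].
      by apply/(@repr_iff b c h n b0 cb); apply/andP; split; [lia|exact: HP].
    by apply/memH; exists j, r.
by rewrite size_map size_filter cnt_total.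
Qed.

Lemma even_prod n : exists y, (n * n.+1 = 2 * y)%N.
Proof.
elim: n => [|n [y Hy]]; first by exists 0%N.
exists (y + n.+1)%N; nia.
Qed.

Lemma Aset_ok c b : (c < b)%N -> uniq (Aset c b) /\ size (Aset c b) = c.+2.
Proof.
move=> cb; split.
- have Hb : Posz b \notin [seq Posz i | i <- iota 0 c.+1].
    rewrite mem_map ?mem_iota; [lia|exact: Posz_inj'].
  rewrite /Aset cat_uniq map_inj_uniq ?iota_uniq; last exact: Posz_inj'.
  by rewrite has_seq1 Hb.
- by rewrite size_cat size_map size_iota /= addn1.
Qed.

Local Open Scope ring_scope.

Lemma part1 (i0 n c bn : nat) : (1 <= n)%N -> (1 <= c)%N ->
  (n * c < bn)%N -> (bn <= n.+1 * c)%N ->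
  RZ (i0 + n.+1) c.+2 ((i0%:Z + 1) * bn%:Z + (n.+1)%:Z * ((i0 + n.+1)%:Z * c%:Z + 1)
     - ((((2 * i0 + n.+2)%:Z * n.+1%:Z * c%:Z)) %/ 2)%Z).
Proof.
move=> n1 c1 Hlo Hhi.
have cb : (c < bn)%N by nia.
have [U S] := @Aset_ok c bn cb.
exists (Aset c bn); split => //; split => //.
rewrite size_sumset; [|lia|lia].
rewrite (@G_high bn c n (i0 + n.+1)) //; last by lia.
have [y Hy] := even_prod n.
have HG := @G_low bn c n n (leqnn n) Hlo.
rewrite Hy in HG.
have HG' : G bn c n = (n + c * y)%N by nia.
rewrite HG'.
have -> : ((2 * i0 + n.+2)%:Z * n.+1%:Z * c%:Z) = ((((i0 + 1) * n.+1 + y) * c)%N%:Z) * 2.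
  nia.
rewrite mulzK //. nia.
Qed.

Theorem mainTheorem10 (h k : nat) (hh : (2 <= h)%N) (hk : (3 <= k)%N) :
  (forall i0 : nat, (i0 <= h - 2)%N ->
     forall b : int,
       (h%:Z - i0%:Z) * (k%:Z - 2) - (k%:Z - 3) <= b <= (h%:Z - i0%:Z) * (k%:Z - 2) ->
       RZ h k ((i0%:Z + 1) * b + (h%:Z - i0%:Z) * (h%:Z * (k%:Z - 2) + 1)
               - (((h%:Z + i0%:Z + 1) * (h%:Z - i0%:Z) * (k%:Z - 2)) %/ 2)%Z))
  /\
  (forall n : int,
     ((h%:Z ^+ 2 * (k%:Z - 2) + h%:Z * k%:Z) %/ 2)%Z - k%:Z + 3 <= n <=
     ((h%:Z ^+ 2 * (k%:Z - 2) + h%:Z * k%:Z) %/ 2)%Z ->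
     RZ h k n).
Proof.
have [c Ek] : exists c, k = c.+2 by exists (k - 2)%N; lia.
subst k.
have P1 : forall i0 : nat, (i0 <= h - 2)%N ->
     forall b : int,
       (h%:Z - i0%:Z) * (c.+2%:Z - 2) - (c.+2%:Z - 3) <= b <= (h%:Z - i0%:Z) * (c.+2%:Z - 2) ->
       RZ h c.+2 ((i0%:Z + 1) * b + (h%:Z - i0%:Z) * (h%:Z * (c.+2%:Z - 2) + 1)
               - (((h%:Z + i0%:Z + 1) * (h%:Z - i0%:Z) * (c.+2%:Z - 2)) %/ 2)%Z).
  move=> i0 Hi0 b /andP [Hb1 Hb2].
  have [n Eh] : exists n, h = (i0 + n.+1)%N by exists (h - i0 - 1)%N; lia.
  subst h.
  case: b Hb1 Hb2 => [bn|bn] Hb1 Hb2; last by exfalso; nia.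
  have E : ((i0 + n.+1)%:Z + i0%:Z + 1) * ((i0 + n.+1)%:Z - i0%:Z) * (c.+2%:Z - 2)
         = (2 * i0 + n.+2)%:Z * n.+1%:Z * c%:Z by lia.
  rewrite E.
  have -> : (i0%:Z + 1) * bn%:Z + ((i0 + n.+1)%:Z - i0%:Z) * ((i0 + n.+1)%:Z * (c.+2%:Z - 2) + 1)
     = (i0%:Z + 1) * bn%:Z + (n.+1)%:Z * ((i0 + n.+1)%:Z * c%:Z + 1) by lia.
  apply: part1; nia.
split => //.
move=> m /andP [Hm1 Hm2].
have [n' Eh] : exists n', h = n'.+1 by exists h.-1; lia.
subst h.
have [y Hy] := even_prod n'.+1.
have E1 : (n'.+1%:Z + 0%:Z + 1) * (n'.+1%:Z - 0%:Z) * (c.+2%:Z - 2) = ((y * c)%N%:Z) * 2 by nia.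
have E2 : (n'.+1%:Z ^+ 2 * (c.+2%:Z - 2) + n'.+1%:Z * c.+2%:Z) = ((y * c + n'.+1)%N%:Z) * 2 by nia.
rewrite E2 mulzK // in Hm1 Hm2.
have := P1 0%N (leq0n _) (m - n'.+1%:Z * (n'.+1%:Z * (c.+2%:Z - 2) + 1) + (y * c)%N%:Z).
rewrite E1 mulzK //.
have -> : (0%:Z + 1) * (m - n'.+1%:Z * (n'.+1%:Z * (c.+2%:Z - 2) + 1) + (y * c)%N%:Z) +
    (n'.+1%:Z - 0%:Z) * (n'.+1%:Z * (c.+2%:Z - 2) + 1) - (y * c)%N%:Z = m by lia.
apply; nia.
Qed.
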